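(* Let $X$ be a countable compact metric space and $\alpha$ an ordinal such that the Cantor–Bendixson derivative $X^{(\alpha+1)}$ consists of exactly one point $q$. Let $f\colon X\to X$ be an expansive homeomorphism. Then $f$ has a nontrivial homoclinic point: there exists $x\in X$, $x\neq q$, such that $f^n(x)\to q$ as $n\to+\infty$ and as $n\to-\infty$.
   Context: The Cantor–Bendixson derivatives are defined by $X^{(0)}=X$, $X^{(\beta+1)}$ = the set of non-isolated points of $X^{(\beta)}$, and $X^{(\lambda)}=\bigcap_{\beta<\lambda}X^{(\beta)}$ for limit $\lambda$. A homeomorphism $f$ of a metric space $(X,d)$ is expansive if there is $c>0$ such that for all $x\neq y$ there is $n\in\mathbb Z$ with $d(f^n(x),f^n(y))>c$. *)

(* Defs.v *)
From Stdlib Require Import Reals ZArith List.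
Open Scope R_scope.

Definition is_metric {X : Type} (d : X -> X -> R) : Prop :=
  (forall x y, 0 <= d x y) /\
  (forall x y, d x y = 0 <-> x = y) /\
  (forall x y, d x y = d y x) /\
  (forall x y z, d x z <= d x y + d y z).

Definition open_set {X : Type} (d : X -> X -> R) (U : X -> Prop) : Prop :=
  forall x, U x -> exists e, 0 < e /\ forall y, d x y < e -> U y.

Definition compact_space {X : Type} (d : X -> X -> R) : Prop :=
  forall (J : Type) (U : J -> X -> Prop),
    (forall j, open_set d (U j)) ->
    (forall x, exists j, U j x) ->
    exists l : list J, forall x, exists j, In j l /\ U j x.

Definition countable_type (X : Type) : Prop :=
  exists g : X -> nat, forall x y, g x = g y -> x = y.

Definition isolated_in {X : Type} (d : X -> X -> R) (A : X -> Prop) (x : X) : Prop :=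
  A x /\ exists e, 0 < e /\ forall y, A y -> d x y < e -> y = x.

Definition derived {X : Type} (d : X -> X -> R) (A : X -> Prop) : X -> Prop :=
  fun x => A x /\ ~ isolated_in d A x.

(** A strict well-order on an index type I (I then represents an ordinal). *)
Definition strict_well_order {I : Type} (lt : I -> I -> Prop) : Prop :=
  well_founded lt /\
  (forall i j k, lt i j -> lt j k -> lt i k) /\
  (forall i j, lt i j \/ i = j \/ lt j i).

(** D is the Cantor--Bendixson hierarchy indexed by the well-order (I, lt):
    D i = intersection over j < i of the derived set of D j, with empty
    intersection = X.  This gives D(min) = X, D(j+1) = (D j)', and
    D(limit) = intersection of earlier D j. *)
Definition CB_hierarchy {X I : Type} (d : X -> X -> R) (lt : I -> I -> Prop)
    (D : I -> X -> Prop) : Prop :=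
  forall i x, D i x <-> (forall j, lt j i -> derived d (D j) x).

Definition continuous_map {X : Type} (d : X -> X -> R) (f : X -> X) : Prop :=
  forall x e, 0 < e -> exists del, 0 < del /\ forall y, d x y < del -> d (f x) (f y) < e.

Definition homeo_pair {X : Type} (d : X -> X -> R) (f g : X -> X) : Prop :=
  (forall x, g (f x) = x) /\ (forall x, f (g x) = x) /\
  continuous_map d f /\ continuous_map d g.

Definition iterZ {X : Type} (f g : X -> X) (n : Z) : X -> X :=
  match n with
  | Z0 => fun x => x
  | Zpos p => Nat.iter (Pos.to_nat p) f
  | Zneg p => Nat.iter (Pos.to_nat p) g
  end.

Definition expansive {X : Type} (d : X -> X -> R) (f g : X -> X) : Prop :=
  exists c, 0 < c /\ forall x y, x <> y ->
    exists n : Z, d (iterZ f g n x) (iterZ f g n y) > c.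

Definition conv_forward {X : Type} (d : X -> X -> R) (f g : X -> X) (x q : X) : Prop :=
  forall e, 0 < e -> exists N : Z, forall n : Z, (N <= n)%Z -> d (iterZ f g n x) q < e.

Definition conv_backward {X : Type} (d : X -> X -> R) (f g : X -> X) (x q : X) : Prop :=
  forall e, 0 < e -> exists N : Z, forall n : Z, (n <= N)%Z -> d (iterZ f g n x) q < e.

(* Main.v *)
Require Import Defs.
From Stdlib Require Import Reals ZArith List Lia Lra Classical Arith.
Open Scope R_scope.

Lemma iter_cancel {X} (f g : X -> X) : (forall x, g (f x) = x) ->
  forall n x, Nat.iter n g (Nat.iter n f x) = x.
Proof.
  intros H n; induction n as [|n IH]; intros x; [reflexivity|].
  rewrite (Nat.iter_succ_r n X f x). change (g (Nat.iter n g (Nat.iter n f (f x))) = x). rewrite IH. apply H.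
Qed.

Lemma iter_fix {X} (f : X -> X) q : f q = q -> forall n, Nat.iter n f q = q.
Proof. intros H n; induction n; simpl; [reflexivity| rewrite IHn; exact H]. Qed.

Lemma iter_inv {X} (f : X -> X) (B : X -> Prop) : (forall y, B y -> B (f y)) ->
  forall n y, B y -> B (Nat.iter n f y).
Proof. intros H n; induction n; intros y Hy; simpl; auto. Qed.

Lemma iter_period {X} (f : X -> X) x p : Nat.iter p f x = x ->
  forall k, Nat.iter (k * p) f x = x.
Proof.
  intros H k; induction k; [reflexivity|].
  replace (S k * p)%nat with (p + k * p)%nat by lia.
  rewrite Nat.iter_add, IHk; exact H.
Qed.

Lemma iter_mod {X} (f : X -> X) x p : (0 < p)%nat -> Nat.iter p f x = x ->
  forall j, Nat.iter j f x = Nat.iter (j mod p) f x.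
Proof.
  intros Hp H j.
  pose proof (Nat.div_mod_eq j p) as E. rewrite Nat.mul_comm in E.
  transitivity (Nat.iter (j mod p + j / p * p) f x); [f_equal; lia|].
  rewrite Nat.iter_add, iter_period by exact H. reflexivity.
Qed.

Lemma ball_open {X} (d : X -> X -> R) (x : X) (e : R) : is_metric d ->
  Defs.open_set d (fun y => d x y < e).
Proof.
  intros [H0 [H1 [H2 H3]]] y Hy. exists (e - d x y). split; [lra|].
  intros z Hz. specialize (H3 x y z). lra.
Qed.

Lemma compact_finite {X} (d : X -> X -> R) : is_metric d -> compact_space d ->
  forall F : X -> Prop,
  (forall z, exists e, 0 < e /\ forall y, F y -> d z y < e -> y = z) ->
  exists l, forall y, F y -> In y l.
Proof.
  intros Hm Hc F HF.
  set (J := {p : X * R | 0 < snd p /\ forall y, F y -> d (fst p) y < snd p -> y = fst p}).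
  destruct (Hc J (fun j y => d (fst (proj1_sig j)) y < snd (proj1_sig j))) as [l Hl].
  - intros j. apply ball_open; exact Hm.
  - intros x. destruct (HF x) as [e [He Hx]].
    exists (exist _ (x, e) (conj He Hx)). simpl.
    destruct Hm as [_ [H1 _]]. rewrite (proj2 (H1 x x) eq_refl). exact He.
  - exists (map (fun j : J => fst (proj1_sig j)) l).
    intros y Fy. destruct (Hl y) as [j [Hj Uj]].
    apply in_map_iff. exists j. split; [|exact Hj].
    destruct j as [[x e] [He Hx]]. simpl in *. symmetry. apply Hx; assumption.
Qed.

Lemma iso_transfer {X} (d : X -> X -> R) (B : X -> Prop) (h h' : X -> X) x :
  continuous_map d h' -> (forall x, h' (h x) = x) -> (forall w, h (h' w) = w) ->
  (forall w, B w -> B (h' w)) -> isolated_in d B x -> B (h x) ->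
  isolated_in d B (h x).
Proof.
  intros Hc K1 K2 HB [Bx [e [He Hi]]] Bhx. split; [exact Bhx|].
  destruct (Hc (h x) e He) as [del [Hdel Hd]]. exists del. split; [exact Hdel|].
  intros w Bw Dw. specialize (Hd w Dw). rewrite K1 in Hd.
  specialize (Hi (h' w) (HB w Bw) Hd). rewrite <- Hi. symmetry. apply K2.
Qed.

Lemma derived_inv {X} (d : X -> X -> R) (B : X -> Prop) f g :
  homeo_pair d f g -> (forall y, B y <-> B (f y)) ->
  forall x, derived d B x <-> derived d B (f x).
Proof.
  intros [K1 [K2 [Cf Cg]]] HB x. unfold derived.
  assert (HBg : forall w, B w -> B (g w)).
  { intros w Bw. apply HB. rewrite K2. exact Bw. }
  assert (HBf : forall w, B w -> B (f w)). { intros w; apply HB. }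
  split; intros [Bx Ni].
  - split; [apply (proj1 (HB x)); exact Bx|]. intro Is. apply Ni.
    pose proof (iso_transfer d B g f (f x) Cf K2 K1 HBf Is) as T.
    rewrite (K1 x) in T. apply T. exact Bx.
  - split; [apply (proj2 (HB x)); exact Bx|]. intro Is. apply Ni.
    apply (iso_transfer d B f g x Cg K1 K2 HBg Is). exact Bx.
Qed.

Lemma closed_D {X I} (d : X -> X -> R) (lt : I -> I -> Prop) (D : I -> X -> Prop) :
  well_founded lt -> CB_hierarchy d lt D ->
  forall i z, (forall e, 0 < e -> exists y, D i y /\ d z y < e) -> D i z.
Proof.
  intros wf HD i. induction i as [i IH] using (well_founded_ind wf).
  intros z Hz. destruct (classic (D i z)) as [Hi|Hn]; [exact Hi|].
  apply (proj2 (HD i z)). intros j Hj. split.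
  - apply (IH j Hj). intros e He. destruct (Hz e He) as [y [Dy Hy]].
    exists y. split; [|exact Hy]. exact (proj1 (proj1 (HD i y) Dy j Hj)).
  - intros [_ [e [He Hiso]]]. destruct (Hz e He) as [y [Dy Hy]].
    assert (y = z). { apply Hiso; [exact (proj1 (proj1 (HD i y) Dy j Hj)) | exact Hy]. }
    subst y. exact (Hn Dy).
Qed.

Lemma D_inv {X I} (d : X -> X -> R) (lt : I -> I -> Prop) (D : I -> X -> Prop) (f g : X -> X) :
  well_founded lt -> CB_hierarchy d lt D -> homeo_pair d f g ->
  forall i x, D i x <-> D i (f x).
Proof.
  intros wf HD Hh i. induction i as [i IH] using (well_founded_ind wf).
  intros x. split; intros H.
  - apply (proj2 (HD i (f x))). intros j Hj.
    apply (proj1 (derived_inv d (D j) f g Hh (IH j Hj) x)).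
    exact (proj1 (HD i x) H j Hj).
  - apply (proj2 (HD i x)). intros j Hj.
    apply (proj2 (derived_inv d (D j) f g Hh (IH j Hj) x)).
    exact (proj1 (HD i (f x)) H j Hj).
Qed.

Lemma conv_nat {X} (d : X -> X -> R) (A : X -> Prop) q (s : nat -> X) :
  is_metric d ->
  (forall e, 0 < e -> exists l, forall y, A y -> e <= d q y -> In y l) ->
  (forall n m, s n = s m -> n = m) -> (forall n, A (s n)) ->
  forall e, 0 < e -> exists N, forall n, (N <= n)%nat -> d (s n) q < e.
Proof.
  intros [_ [_ [M2 _]]] Far inj As e He.
  assert (H : forall l : list X, exists N, forall n, (N <= n)%nat -> ~ In (s n) l).
  { induction l as [|y l [N IH]].
    - exists 0%nat. intros n _ [].
    - destruct (classic (exists n0, s n0 = y)) as [[n0 E]|NE].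
      + exists (Nat.max N (S n0)). intros n Hn [E'|Hin].
        * subst y. apply inj in E'. lia.
        * apply (IH n); [lia|exact Hin].
      + exists N. intros n Hn [E'|Hin];
          [apply NE; exists n; exact (eq_sym E')| exact (IH n Hn Hin)]. }
  destruct (Far e He) as [l Hl].
  destruct (H l) as [N HN]. exists N. intros n Hn. apply Rnot_le_lt. intro Hle.
  apply (HN n Hn). apply Hl; [apply As| rewrite M2; exact Hle].
Qed.

Lemma iterZ_pos {X} (f g : X -> X) n x : (0 <= n)%Z ->
  iterZ f g n x = Nat.iter (Z.to_nat n) f x.
Proof. destruct n; intros; try reflexivity; lia. Qed.

Lemma iterZ_neg {X} (f g : X -> X) n x : (n <= 0)%Z ->
  iterZ f g n x = Nat.iter (Z.to_nat (- n)) g x.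
Proof. destruct n; intros; try reflexivity; lia. Qed.

Theorem mainTheorem16 :
  forall (X : Type) (d : X -> X -> R),
    is_metric d -> compact_space d -> countable_type X ->
  forall (I : Type) (lt : I -> I -> Prop) (D : I -> X -> Prop) (a : I) (q : X),
    strict_well_order lt -> CB_hierarchy d lt D ->
    (forall x, derived d (D a) x <-> x = q) ->
  forall f g : X -> X,
    homeo_pair d f g -> expansive d f g ->
    exists x : X, x <> q /\ conv_forward d f g x q /\ conv_backward d f g x q.
Proof.
  intros X d Hm Hc _ I lt D a q [wf _] HD Hq f g Hh [c [Hc0 Hexp]].
  pose proof Hm as [M0 [M1 [M2 M3]]].
  pose proof Hh as [K1 [K2 [Cf Cg]]].
  set (A := D a).
  assert (Ainv : forall y, A y <-> A (f y)) by (apply (D_inv d lt D f g wf HD Hh)).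
  assert (Af : forall y, A y -> A (f y)) by (intros y; apply Ainv).
  assert (Ag : forall y, A y -> A (g y)).
  { intros y Ay. apply (proj2 (Ainv (g y))). rewrite K2. exact Ay. }
  assert (Dq : derived d A q) by (apply Hq; reflexivity).
  assert (Hfq : f q = q).
  { apply Hq. exact (proj1 (derived_inv d A f g Hh Ainv q) Dq). }
  assert (Hgq : g q = q) by (rewrite <- Hfq at 1; apply K1).
  assert (Hclosed : forall z, (forall e, 0 < e -> exists y, A y /\ d z y < e) -> A z)
    by (apply (closed_D d lt D wf HD a)).
  assert (Far : forall e, 0 < e -> exists l, forall y, A y -> e <= d q y -> In y l).
  { intros e He.
    destruct (compact_finite d Hm Hc (fun y => A y /\ e <= d q y)) as [l Hl];
      [| exists l; intros y Ay Ey; apply Hl; split; assumption].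
    intros z. apply NNPP. intro Hnot.
    assert (Acc : forall e', 0 < e' -> exists y, (A y /\ e <= d q y) /\ d z y < e' /\ y <> z).
    { intros e' He'. apply NNPP. intro Hn. apply Hnot. exists e'. split; [exact He'|].
      intros y Fy Dy. apply NNPP. intro Hyz. apply Hn. exists y. auto. }
    assert (Az : A z).
    { apply Hclosed. intros e' He'. destruct (Acc e' He') as [y [[Ay _] [Dy _]]]. eauto. }
    assert (Dz : derived d A z).
    { split; [exact Az|]. intros [_ [e' [He' Hiso]]].
      destruct (Acc e' He') as [y [[Ay _] [Dy Nyz]]]. exact (Nyz (Hiso y Ay Dy)). }
    apply Hq in Dz. subst z. destruct (Acc e He) as [y [[_ Ey] [Dy _]]]. lra. }
  assert (Inf : forall l, exists y, A y /\ y <> q /\ ~ In y l).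
  { intros l.
    assert (Hmin : exists e, 0 < e /\ forall y, In y l -> y <> q -> e <= d q y).
    { induction l as [|y l [e [He IH]]].
      - exists 1. split; [lra| intros y []].
      - destruct (classic (y = q)) as [Eq|Nq].
        + exists e. split; [exact He|]. intros z [<-|Hz] Nz; [contradiction| auto].
        + assert (d q y <> 0) by (intro H0; apply Nq; symmetry; apply M1; exact H0).
          pose proof (M0 q y).
          exists (Rmin e (d q y)). split; [apply Rmin_glb_lt; lra|].
          intros z [<-|Hz] Nz; [apply Rmin_r | eapply Rle_trans; [apply Rmin_l| auto]]. }
    destruct Hmin as [e [He Hmin]]. apply NNPP. intro Hn.
    pose proof Dq as [Aq Niso]. apply Niso. split; [exact Aq|].
    exists e. split; [exact He|]. intros y Ay Dy. apply NNPP. intro Nq.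
    destruct (classic (In y l)) as [Iy|Niy];
      [specialize (Hmin y Iy Nq); lra | apply Hn; exists y; auto]. }
  assert (iterZq : forall n, iterZ f g n q = q).
  { intros [|p|p]; simpl; [reflexivity| apply iter_fix; exact Hfq| apply iter_fix; exact Hgq]. }
  assert (Exp : forall x, x <> q -> exists n, c < d (iterZ f g n x) q).
  { intros x Nx. destruct (Hexp x q Nx) as [n Hn]. exists n. rewrite iterZq in Hn. exact Hn. }
  destruct (classic (exists x, A x /\ x <> q /\ forall p, (0 < p)%nat -> Nat.iter p f x <> x))
    as [[x [Ax [Nx NP]]] | Hper].
  - assert (injf : forall n m, Nat.iter n f x = Nat.iter m f x -> n = m).
    { assert (aux : forall n k, Nat.iter n f x = Nat.iter (n + k) f x -> k = 0%nat).
      { intros n k E. destruct k as [|k]; [reflexivity|exfalso].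
        rewrite Nat.iter_add in E.
        apply (f_equal (Nat.iter n g)) in E. rewrite !iter_cancel in E by exact K1.
        apply (NP (S k)); [lia| symmetry; exact E]. }
      intros n m E. destruct (Nat.lt_total n m) as [H|[H|H]]; [|exact H|].
      - replace m with (n + (m - n))%nat in E by lia. apply aux in E. lia.
      - replace n with (m + (n - m))%nat in E by lia. symmetry in E. apply aux in E. lia. }
    assert (injg : forall n m, Nat.iter n g x = Nat.iter m g x -> n = m).
    { assert (aux : forall n k, Nat.iter n g x = Nat.iter (n + k) g x -> k = 0%nat).
      { intros n k E. destruct k as [|k]; [reflexivity|exfalso].
        rewrite Nat.add_comm, Nat.iter_add in E.
        pose proof (iter_cancel g f K2 n x) as Ex.
        remember (Nat.iter n g x) as w eqn:Hw.
        assert (Ew : Nat.iter (S k) f w = w).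
        { rewrite E at 1. apply iter_cancel. exact K2. }
        apply (NP (S k)); [lia|].
        rewrite <- Ex. rewrite <- Nat.iter_add, Nat.add_comm, Nat.iter_add, Ew. reflexivity. }
      intros n m E. destruct (Nat.lt_total n m) as [H|[H|H]]; [|exact H|].
      - replace m with (n + (m - n))%nat in E by lia. apply aux in E. lia.
      - replace n with (m + (n - m))%nat in E by lia. symmetry in E. apply aux in E. lia. }
    exists x. split; [exact Nx|]. split.
    + intros e He.
      destruct (conv_nat d A q (fun k => Nat.iter k f x) Hm Far injf
                  (fun k => iter_inv f A Af k x Ax) e He) as [N HN].
      exists (Z.of_nat N). intros n Hn. rewrite (iterZ_pos f g n x) by lia. apply HN. lia.
    + intros e He.
      destruct (conv_nat d A q (fun k => Nat.iter k g x) Hm Far injg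
                  (fun k => iter_inv g A Ag k x Ax) e He) as [N HN].
      exists (- Z.of_nat N)%Z. intros n Hn. rewrite (iterZ_neg f g n x) by lia. apply HN. lia.
  - exfalso.
    assert (Per : forall x, A x -> x <> q -> exists p, (0 < p)%nat /\ Nat.iter p f x = x).
    { intros x Ax Nx. apply NNPP. intro Hn. apply Hper. exists x. split; [exact Ax|].
      split; [exact Nx|]. intros p Hp E. apply Hn. exists p. auto. }
    destruct (Far c Hc0) as [F HF].
    assert (Orb : forall l : list X, exists l', forall y, In y l -> A y -> y <> q ->
                    forall j, In (Nat.iter j f y) l').
    { induction l as [|y l [l' IH]].
      - exists nil. intros y [].
      - destruct (classic (A y /\ y <> q)) as [[Ay Ny]|Hn].
        + destruct (Per y Ay Ny) as [p [Hp Ep]].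
          exists (map (fun j => Nat.iter j f y) (seq 0 p) ++ l').
          intros z [<-|Hz] Az Nz j.
          * apply in_or_app. left. rewrite (iter_mod f y p Hp Ep j). apply (in_map (fun j => Nat.iter j f y)).
            apply in_seq. pose proof (Nat.mod_upper_bound j p ltac:(lia)). lia.
          * apply in_or_app. right. auto.
        + exists l'. intros z [<-|Hz] Az Nz j; [exfalso; auto| auto]. }
    destruct (Orb F) as [l' Hl'].
    destruct (Inf l') as [x [Ax [Nx Nin]]]. apply Nin.
    destruct (Exp x Nx) as [n Hn].
    assert (key : forall y, A y -> c < d y q -> In y F /\ y <> q).
    { intros y Ay Hy. split.
      - apply HF; [exact Ay| rewrite M2; lra].
      - intro E; subst y. rewrite (proj2 (M1 q q) eq_refl) in Hy. lra. }
    destruct n as [|p0|p0].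
    + change (c < d x q) in Hn. destruct (key x Ax Hn) as [Fx _].
      exact (Hl' x Fx Ax Nx 0%nat).
    + change (c < d (Nat.iter (Pos.to_nat p0) f x) q) in Hn.
      assert (Ay : A (Nat.iter (Pos.to_nat p0) f x)) by (apply iter_inv; assumption).
      destruct (key _ Ay Hn) as [Fy Ny].
      destruct (Per x Ax Nx) as [p [Hp Ep]].
      assert (Ex : Nat.iter ((p - 1) * Pos.to_nat p0) f (Nat.iter (Pos.to_nat p0) f x) = x).
      { rewrite <- Nat.iter_add.
        replace ((p - 1) * Pos.to_nat p0 + Pos.to_nat p0)%nat with (Pos.to_nat p0 * p)%nat by nia.
        apply iter_period; exact Ep. }
      rewrite <- Ex. apply Hl'; assumption.
    + change (c < d (Nat.iter (Pos.to_nat p0) g x) q) in Hn.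
      assert (Ay : A (Nat.iter (Pos.to_nat p0) g x)) by (apply iter_inv; assumption).
      destruct (key _ Ay Hn) as [Fy Ny].
      rewrite <- (iter_cancel g f K2 (Pos.to_nat p0) x). apply Hl'; assumption.
Qed.
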